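(* Assume (A1)–(A3). If $m_2<0$, then for every $k\ge0$ there exist $\tilde C>0$ and $\tilde\delta>0$ such that for all $i\ge k_0$, $j\in\{0,\dots,k_0-1\}$ and $\ell\ge0$, \[\mathbb P_{(i,j)}\bigl(Y(T^k)=\ell,\ T^k<\tau\bigr)\le\tilde C\exp(-\tilde\delta(i+\ell)),\] where $T^k=\inf\{n>0: X(n)\le\max(k_0-1,k)\}$ and $\tau=\inf\{n>0: Y(n)<k_0\}$.
   Context: Let $\mathbb N=\{0,1,2,\dots\}$ and fix an integer $k_0\ge1$. Let $\mu$, $\mu'_j$ ($0\le j<k_0$), $\mu''_i$ ($0\le i<k_0$), $\mu_{ij}$ ($0\le i,j<k_0$) be probability measures on $\mathbb Z^2$. The random walk $Z=(X(n),Y(n))$ on $\mathbb N^2$ has transition probabilities $p((i,j)\to(i',j'))$ equal to $\mu(i'-i,j'-j)$ if $i,j\ge k_0$; $\mu'_j(i'-i,j'-j)$ if $i\ge k_0$, $0\le j<k_0$; $\mu''_i(i'-i,j'-j)$ if $0\le i<k_0$, $j\ge k_0$; $\mu_{ij}(i'-i,j'-j)$ if $0\le i,j<k_0$; $\mathbb P_{(i,j)}$ is its law from $(i,j)$. Assumptions: (A1) $\mu(a,b)=0$ if $a<-k_0$ or $b<-k_0$; $\mu'_j(a,b)=0$ if $a<-k_0$ or $b<-j$; $\mu''_i(a,b)=0$ if $b<-k_0$ or $a<-i$; $\mu_{ij}(a,b)=0$ if $a<-i$ or $b<-j$. (A2) There are $\delta,\gamma,C>0$ with $\sup_{(i,j)\in\mathbb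 N^2}\mathbb E_{(i,j)}[\exp(\delta(X(1)-i)+\gamma(Y(1)-j))]\le C$. (A3) The random walk $Z_0$ on $\mathbb Z^2$ with increment law $\mu$, the chain $Z_1$ on $\mathbb N\times\mathbb Z$ (transitions $\mu$ for first coordinate $\ge k_0$, $\mu''_i$ for first coordinate $i<k_0$), the chain $Z_2$ on $\mathbb Z\times\mathbb N$ (transitions $\mu$ for second coordinate $\ge k_0$, $\mu'_j$ for second coordinate $j<k_0$), and $Z$ are irreducible on their state spaces. $m_2=\sum_{(a,b)}b\mu(a,b)$. *)

(* Defs.v *)
From HB Require Import structures.
From mathcomp Require Import all_boot all_order all_algebra.
From mathcomp Require Import all_classical all_reals all_analysis.
From Stdlib Require Import Relations.
Set Implicit Arguments. Unset Strict Implicit. Unset Printing Implicit Defensive.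
Import Order.TTheory GRing.Theory Num.Theory.
Local Open Scope classical_set_scope.
Local Open Scope ring_scope.

Section Defs.
Variable R : realType.

Definition is_prob_Z2 (m : int * int -> R) : Prop :=
  (forall d, 0 <= m d) /\ (\esum_(d in [set: int * int]) (m d)%:E = 1%E).

Definition kernelZ (k0 : nat) (mu : int * int -> R) (mu' mu'' : nat -> int * int -> R)
  (mu2 : nat -> nat -> int * int -> R) (z w : nat * nat) : R :=
  let d := ((w.1%:Z - z.1%:Z)%R, (w.2%:Z - z.2%:Z)%R) in
  if (k0 <= z.1)%N && (k0 <= z.2)%N then mu d
  else if (k0 <= z.1)%N then mu' z.2 d
  else if (k0 <= z.2)%N then mu'' z.1 d
  else mu2 z.1 z.2 d.

Definition kernelZ0 (mu : int * int -> R) (z w : int * int) : R :=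
  mu (w.1 - z.1, w.2 - z.2).

Definition kernelZ1 (k0 : nat) (mu : int * int -> R) (mu'' : nat -> int * int -> R)
  (z w : nat * int) : R :=
  let d := ((w.1%:Z - z.1%:Z)%R, w.2 - z.2) in
  if (k0 <= z.1)%N then mu d else mu'' z.1 d.

Definition kernelZ2 (k0 : nat) (mu : int * int -> R) (mu' : nat -> int * int -> R)
  (z w : int * nat) : R :=
  let d := (w.1 - z.1, (w.2%:Z - z.2%:Z)%R) in
  if (k0 <= z.2)%N then mu d else mu' z.2 d.

Definition irreducible (S : Type) (P : S -> S -> R) : Prop :=
  forall s t : S, clos_refl_trans S (fun a b => 0 < P a b) s t.

(* Taboo transition probabilities: [taboo P A n z w] is the probability,
   starting from z, of being at w at time n+1 while the states visited at
   times 1..n all lie in A. *)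
Fixpoint taboo (S : choiceType) (P : S -> S -> R) (A : set S) (n : nat)
  (z w : S) : \bar R :=
  match n with
  | 0 => (P z w)%:E
  | n'.+1 => \esum_(u in A) ((P z u)%:E * taboo P A n' u w)%E
  end.

(* Probability, from z, that the first time n > 0 at which the chain leaves
   A, it is in the set B (B is meant to be disjoint from A). *)
Definition exit_into (S : choiceType) (P : S -> S -> R) (A B : set S) (z : S)
  : \bar R :=
  \esum_(n in [set: nat]) \esum_(w in B) taboo P A n z w.

(* P_{(i,j)}( Y(T^k) = l, T^k < tau ) with
   T^k = inf{n>0 : X(n) <= max(k0-1,k)}, tau = inf{n>0 : Y(n) < k0}:
   the chain stays in {X > K, Y >= k0} at times 1..T^k - 1 and at time T^k
   satisfies X <= K, Y = l, Y >= k0. *)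
Definition prob_YT_lt_tau (k0 : nat) (P : nat * nat -> nat * nat -> R)
  (k : nat) (z : nat * nat) (l : nat) : \bar R :=
  let K := maxn (k0.-1) k in
  exit_into P [set w | (K < w.1)%N /\ (k0 <= w.2)%N]
              [set w | (w.1 <= K)%N /\ w.2 = l /\ (k0 <= w.2)%N] z.

Definition mean2 (mu : int * int -> R) : \bar R :=
  let pos := \esum_(d in [set d : int * int | (0 < d.2)%R]) (d.2%:~R * mu d)%:E in
  let neg := \esum_(d in [set d : int * int | (d.2 < 0)%R]) ((- d.2)%:~R * mu d)%:E in
  (pos - neg)%E.

End Defs.

(* Main.v *)
Require Import Defs.
From HB Require Import structures.
From mathcomp Require Import all_boot all_order all_algebra.
From mathcomp Require Import all_classical all_reals all_analysis.
From Stdlib Require Import Relations.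
From mathcomp Require Import ring lra zify.
Import Order.TTheory GRing.Theory Num.Theory.
Local Open Scope classical_set_scope.
Local Open Scope ring_scope.

Section Aux.
Variable R : realType.
Local Open Scope ereal_scope.

Lemma esumZl (T : choiceType) (I : set T) (c : R) (a : T -> \bar R) :
  (0 <= c)%R -> (forall i, 0 <= a i) ->
  \esum_(i in I) (c%:E * a i) = c%:E * \esum_(i in I) a i.
Proof.
move=> c0 a0; rewrite /esum -ereal_supZl //; last first.
  by apply/set0P; exists 0; exists set0; [exact: fsets_set0|rewrite fsbig_set0].
congr ereal_sup; apply/seteqP; split => x /=.
  move=> [X [finX XI] <-]; exists (\sum_(i \in X) a i); first by exists X.
  by rewrite ge0_mule_fsumr.
move=> [y [X [finX XI] <-] <-]; exists X => //.
by rewrite ge0_mule_fsumr.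
Qed.

Lemma esumZr (T : choiceType) (I : set T) (c : R) (a : T -> \bar R) :
  (0 <= c)%R -> (forall i, 0 <= a i) ->
  \esum_(i in I) (a i * c%:E) = (\esum_(i in I) a i) * c%:E.
Proof.
move=> c0 a0; rewrite (eq_esum (b := fun i => c%:E * a i)); last by move=> i _; rewrite muleC.
by rewrite esumZl// muleC.
Qed.

Lemma esum_swap (T1 T2 : choiceType) (I : set T1) (J : set T2)
  (a : T1 -> T2 -> \bar R) : (forall i j, I i -> J j -> 0 <= a i j) ->
  \esum_(i in I) \esum_(j in J) a i j = \esum_(j in J) \esum_(i in I) a i j.
Proof.
move=> a0; rewrite (esum_esum (J := fun _ => J))//.
rewrite (esum_esum (J := fun _ => I)); last by move=> i j Ji Ij; apply: a0.
rewrite (reindex_esum (J `*`` fun=> I) (I `*`` fun=> J) (fun x => (x.2, x.1)))//.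
split=> //=.
- by move=> [i j] [/= ? ?].
- by move=> [i1 i2] [j1 j2] /= _ _ [] -> ->.
- by move=> [i1 i2] [/= ? ?]; exists (i2, i1).
Qed.

Lemma esum_subT (T : choiceType) (I : set T) (a : T -> \bar R) :
  (forall i, 0 <= a i) -> \esum_(i in I) a i <= \esum_(i in [set: T]) a i.
Proof.
move=> a0; rewrite esum_mkcond; apply: le_esum => i _; case: ifP => // _.
Qed.

Lemma esum_disjT (T : choiceType) (A B : set T) (a : T -> \bar R) :
  (forall i, 0 <= a i) -> (forall i, A i -> B i -> False) ->
  \esum_(i in A) a i + \esum_(i in B) a i <= \esum_(i in [set: T]) a i.
Proof.
move=> a0 dAB; rewrite (esum_mkcond A) (esum_mkcond B) -esumD; last 2 first.
- by move=> i _; case: ifP.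
- by move=> i _; case: ifP.
apply: le_esum => i _; case: ifPn => iA; case: ifPn => iB.
- by exfalso; apply: (dAB i); apply/set_mem.
- by rewrite adde0.
- by rewrite add0e.
- by rewrite adde0.
Qed.


Lemma taboo_ge0 (S : choiceType) (P : S -> S -> R) (A : set S) :
  (forall u w, 0 <= P u w)%R -> forall n z w, 0 <= taboo P A n z w.
Proof.
move=> P0; elim=> [|n IH] z w /=; first by rewrite lee_fin.
by apply: esum_ge0 => u _; apply: mule_ge0; rewrite ?lee_fin.
Qed.

Lemma exit_bound (S : choiceType) (P : S -> S -> R) (A B : set S) (h : S -> R) :
  (forall u w, 0 <= P u w)%R -> (forall w, 0 <= h w)%R ->
  (forall w, B w -> 1 <= h w)%R ->
  (forall w, A w -> B w -> False) ->
  (forall u, A u -> \esum_(w in [set: S]) (P u w * h w)%:E <= (h u)%:E) ->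
  forall z, exit_into P A B z <= \esum_(w in [set: S]) (P z w * h w)%:E.
Proof.
move=> P0 h0 hB dAB hA z.
have t0 := @taboo_ge0 S P A P0.
pose G n u := \esum_(w in B) (taboo P A n u w * (h w)%:E).
have G0 n u : 0 <= G n u.
  by apply: esum_ge0 => w _; apply: mule_ge0; rewrite ?lee_fin.
have Gstep n u : G n.+1 u = \esum_(v in A) ((P u v)%:E * G n v).
  rewrite /G /=.
  transitivity (\esum_(w in B) \esum_(v in A)
      ((P u v)%:E * (taboo P A n v w * (h w)%:E))).
    apply: eq_esum => w _.
    have E := @esumZr _ A (h w) (fun v => (P u v)%:E * taboo P A n v w) (h0 w).
    apply: (etrans (esym (E _))).
      by move=> v; apply: mule_ge0; rewrite ?lee_fin.
    by apply: eq_esum => v _; rewrite muleA.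
  rewrite esum_swap; last first.
    by move=> w v _ _; apply: mule_ge0; rewrite ?lee_fin//; apply: mule_ge0; rewrite ?lee_fin.
  apply: eq_esum => v _; rewrite esumZl//.
  by move=> w; apply: mule_ge0; rewrite ?lee_fin.
pose Sm N u := \sum_(0 <= n < N) G n u.
have Sm0 N u : 0 <= Sm N u by apply: sume_ge0 => n _.
have Sstep N u : Sm N.+1 u = G 0%N u + \esum_(v in A) ((P u v)%:E * Sm N v).
  rewrite /Sm (@big_nat_recl _ _ _ N 0%N)//; congr (_ + _).
  under eq_bigr do rewrite Gstep.
  rewrite -esum_sum; last first.
    by move=> v n _ _; apply: mule_ge0; rewrite ?lee_fin.
  apply: eq_esum => v _; rewrite ge0_sume_distrr//.
have G0E u : G 0%N u = \esum_(w in B) (P u w * h w)%:E.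
  by apply: eq_esum => w _ /=; rewrite EFinM.
have key N u : (forall v, A v -> Sm N v <= (h v)%:E) ->
    Sm N.+1 u <= \esum_(w in [set: S]) (P u w * h w)%:E.
  move=> IH; rewrite Sstep G0E.
  apply: (le_trans _ (@esum_disjT _ B A _ _ _)); last 2 first.
  - by move=> w; rewrite lee_fin mulr_ge0.
  - by move=> w Bw Aw; apply: (dAB w).
  apply: leeD => //; apply: le_esum => v Av; rewrite EFinM.
  by apply: lee_wpmul2l; rewrite ?lee_fin//; apply: IH.
have claim1 N : forall u, A u -> Sm N u <= (h u)%:E.
  elim: N => [|N IH] u Au; first by rewrite /Sm big_geq// lee_fin.
  by apply: (le_trans (key N u IH)); apply: hA.
have claim2 N : Sm N z <= \esum_(w in [set: S]) (P z w * h w)%:E.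
  case: N => [|N]; last exact: (key N z (claim1 N)).
  rewrite /Sm big_geq//; apply: esum_ge0 => w _; rewrite lee_fin mulr_ge0//.
rewrite /exit_into.
apply: (@le_trans _ _ (\esum_(n in [set: nat]) G n z)).
  apply: le_esum => n _; apply: le_esum => w Bw.
  by apply: lee_pemulr; rewrite ?lee_fin//; apply: hB.
rewrite -nneseries_esumT//.
apply: lime_le; first exact: is_cvg_nneseries.
by apply: nearW => N; apply: claim2.
Qed.

End Aux.

Section Real.
Variable R : realType.

Lemma E4 (x : R) : expR x * (1 - x) <= 1.
Proof.
have h := expR_ge1Dx (- x).
have e : expR x * expR (- x) = 1 by rewrite -expRD subrr expR0.
have e0 := expR_ge0 x.
nra.
Qed.

Lemma E1 (x : R) : 0 <= x -> expR (- x) <= 1 - x + x ^+ 2.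
Proof.
move=> x0; have h1 := E4 (- x); have h2 := expR_ge1Dx (- x).
have e0 := expR_ge0 (- x).
rewrite opprK in h1.
nra.
Qed.

Lemma E2 (y : R) : 0 <= y -> expR y <= 1 + y + y ^+ 2 * expR y.
Proof.
move=> y0; have h1 := E4 y; have e0 := expR_ge0 y.
nra.
Qed.

Lemma E3 (t g : R) : 0 <= t -> 0 < g ->
  t ^+ 2 <= 16 / g ^+ 2 * expR (g * t / 2).
Proof.
move=> t0 g0.
have h := expR_ge1Dx (g * t / 4).
have e : expR (g * t / 2) = expR (g * t / 4) ^+ 2.
  by rewrite expr2 -expRD; congr expR; field.
rewrite e; set E := expR (g * t / 4) in h *.
have gt0 : 0 <= g * t / 4 by apply: divr_ge0 => //; apply: mulr_ge0 => //; apply: ltW.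
have hE : g * t / 4 <= E by lra.
have hE2 : (g * t / 4) ^+ 2 <= E ^+ 2 by nra.
have gne : g != 0 by rewrite gt_eqF.
have -> : t ^+ 2 = 16 / g ^+ 2 * (g * t / 4) ^+ 2 by field.
apply: ler_wpM2l => //; apply: divr_ge0 => //; apply: exprn_ge0; lra.
Qed.

End Real.

Section Real2.
Variable R : realType.

Lemma F5 (k0 : nat) (g b m : R) (d2 : int) :
  0 < g -> 0 < b -> b <= g / 2 -> 0 <= m -> (m != 0 -> - k0%:Z <= d2) ->
  m * expR (b * d2%:~R) + b * (if d2 < 0 then (- d2)%:~R * m else 0)
  <= m + b * (if 0 < d2 then d2%:~R * m else 0) + (b ^+ 2 * (k0%:R ^+ 2)) * m
     + (b ^+ 2 * (16 / g ^+ 2)) * (m * expR (g * d2%:~R)).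
Proof.
move=> g0 b0 bg m0 hk.
have eg := expR_ge0 (g * d2%:~R).
have c0 : 0 <= b ^+ 2 * (16 / g ^+ 2) * (m * expR (g * d2%:~R)).
  apply: mulr_ge0; last exact: mulr_ge0.
  by apply: mulr_ge0; [apply: exprn_ge0; lra|apply: divr_ge0; [lra|apply: exprn_ge0; lra]].
have c1 : 0 <= b ^+ 2 * (k0%:R ^+ 2) * m.
  by apply: mulr_ge0 => //; apply: mulr_ge0; apply: exprn_ge0; [lra|exact: ler0n].
case: ifP => hd; case: ifP => hp.
- by exfalso; lia.
- rewrite mulr0 addr0.
  have [->|mn0] := eqVneq m 0.
    rewrite !(mul0r, mulr0, add0r, addr0); lra.
  have hk' := hk mn0.
  set t : R := d2%:~R.
  have tlt : t < 0 by rewrite /t ltrz0.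
  have tge : - k0%:R <= t.
    by rewrite /t -(ler_int R) in hk'; rewrite mulrNz in hk'.
  have -> : (- d2)%:~R = - t by rewrite /t mulrNz.
  have h1 := @E1 R (- (b * t)) (ltac:(nra)).
  rewrite opprK in h1.
  have h2 : m * expR (b * t) <= m * (1 + b * t + (b * t) ^+ 2).
    apply: ler_wpM2l => //; rewrite sqrrN in h1; lra.
  have h3 : t ^+ 2 <= k0%:R ^+ 2 by nra.
  have h4 : b ^+ 2 * t ^+ 2 * m <= b ^+ 2 * (k0%:R ^+ 2) * m.
    apply: ler_wpM2r => //; apply: ler_wpM2l => //; apply: exprn_ge0; lra.
  have e : m * (1 + b * t + (b * t) ^+ 2) = m + b * t * m + b ^+ 2 * t ^+ 2 * m.
    by ring.
  lra.
- rewrite mulr0 addr0.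
  set t : R := d2%:~R.
  have tgt : 0 < t by rewrite /t ltr0z.
  have h1 := @E2 R (b * t) (ltac:(nra)).
  have h3 := @E3 R t g (ltW tgt) g0.
  have eb : expR (b * t) <= expR (g * t / 2).
    by rewrite ler_expR; nra.
  have h5 : (b * t) ^+ 2 * expR (b * t) <= b ^+ 2 * (16 / g ^+ 2) * expR (g * t).
    have -> : expR (g * t) = expR (g * t / 2) * expR (g * t / 2).
      by rewrite -expRD; congr expR; field.
    have ebp := expR_ge0 (b * t).
    have -> : (b * t) ^+ 2 * expR (b * t) = b ^+ 2 * (t ^+ 2 * expR (b * t)) by ring.
    rewrite -mulrA; apply: ler_wpM2l; first by apply: exprn_ge0; lra.
    rewrite mulrA; apply: ler_pM => //; first by apply: exprn_ge0; lra.
  have h6 : m * expR (b * t) <= m * (1 + b * t + b ^+ 2 * (16 / g ^+ 2) * expR (g * t)).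
    by apply: ler_wpM2l => //; lra.
  have e : m * (1 + b * t + b ^+ 2 * (16 / g ^+ 2) * expR (g * t)) =
    m + b * (t * m) + b ^+ 2 * (16 / g ^+ 2) * (m * expR (g * t)) by ring.
  lra.
- have hd0 : d2 = 0 by lia.
  subst d2; rewrite ?mulr0 ?expR0 ?mulr1 ?addr0 in c0 *; lra.
Qed.

End Real2.

Section Psi.
Variable R : realType.

Lemma esum_if (T : choiceType) (P : pred T) (f : T -> R) :
  \esum_(x in [set x | P x]) (f x)%:E =
  \esum_(x in [set: T]) (if P x then f x else 0)%:E.
Proof.
rewrite esum_mkcond; apply: eq_esum => x _.
have -> : (x \in [set x | P x]) = P x.
  by apply/idP/idP => [/set_mem|h]; [|apply: mem_set].
by case: (P x).
Qed.

Lemma psi_bound (k0 : nat) (mu : int * int -> R) (g Mb : R) :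
  (1 <= k0)%N -> is_prob_Z2 mu ->
  (forall a b : int, (a < - k0%:Z) \/ (b < - k0%:Z) -> mu (a, b) = 0) ->
  0 < g ->
  (\esum_(d in [set: int * int]) (mu d * expR (g * d.2%:~R))%:E <= Mb%:E)%E ->
  (mean2 mu < 0)%E ->
  exists b eta : R, [/\ 0 < b, b <= g / 2, 0 < eta &
    (\esum_(d in [set: int * int]) (mu d * expR (b * d.2%:~R))%:E <= (1 - eta)%:E)%E].
Proof.
move=> k1 [mu0 mu1] A1 g0 HM Hm.
have hk d : mu d != 0 -> - k0%:Z <= d.2.
  case: d => d1 d2 /= mn0; rewrite leNgt; apply/negP => h.
  by move/eqP: mn0; apply; apply: A1; right.
set M := \esum_(d in [set: int * int]) (mu d * expR (g * d.2%:~R))%:E in HM.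
have M0 : (0 <= M)%E.
  by apply: esum_ge0 => d _; rewrite lee_fin mulr_ge0 ?expR_ge0.
have Mb0 : 0 <= Mb by rewrite -lee_fin (le_trans M0).
move: Hm; rewrite /mean2 /=.
set pos := \esum_(d in _) _.
set neg := \esum_(d in _) _.
move=> Hm.
have pos0 : (0 <= pos)%E.
  by apply: esum_ge0 => d /= h; rewrite lee_fin mulr_ge0// ler0z ltW.
have neg0 : (0 <= neg)%E.
  by apply: esum_ge0 => d /= h; rewrite lee_fin mulr_ge0// ler0z oppr_ge0 ltW.
have negk : (neg <= k0%:R%:E)%E.
  apply: (@le_trans _ _ (\esum_(d in [set d : int * int | d.2 < 0]) (k0%:R * mu d)%:E)).
    apply: le_esum => d /= h; rewrite lee_fin.
    have [->|mn0] := eqVneq (mu d) 0; first by rewrite !mulr0.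
    apply: ler_wpM2r => //; have := hk d mn0 => hk'.
    have : ((- d.2)%:~R <= (k0%:Z)%:~R :> R) by rewrite ler_int lerNl.
    by [].
  apply: le_trans; first by apply: esum_subT => d; rewrite lee_fin mulr_ge0.
  under eq_esum do rewrite EFinM.
  by rewrite esumZl// mu1 mule1.
have posM : (pos <= (g^-1 * Mb)%:E)%E.
  apply: (@le_trans _ _ (\esum_(d in [set d : int * int | 0 < d.2])
     (g^-1 * (mu d * expR (g * d.2%:~R)))%:E)).
    apply: le_esum => d /= h; rewrite lee_fin.
    rewrite mulrCA [_ * mu d]mulrC; apply: ler_wpM2l => //.
    have := expR_ge1Dx (g * d.2%:~R).
    rewrite -(ler_pM2l g0) mulrA mulfV ?gt_eqF// mul1r; lra.
  apply: le_trans; first by apply: esum_subT => d; rewrite lee_fin mulr_ge0 ?invr_ge0 ?mulr_ge0 ?expR_ge0// ltW.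
  under eq_esum do rewrite EFinM.
  have gi0 : 0 <= g^-1 by rewrite invr_ge0 ltW.
  rewrite esumZl//; last by move=> d; rewrite lee_fin mulr_ge0 ?expR_ge0.
  by rewrite EFinM; apply: lee_wpmul2l; rewrite ?lee_fin.
have posf : pos \is a fin_num.
  by rewrite ge0_fin_numE// (le_lt_trans posM)// ltry.
have negf : neg \is a fin_num.
  by rewrite ge0_fin_numE// (le_lt_trans negk)// ltry.
set p := fine pos. set n := fine neg.
have posE : pos = p%:E by rewrite /p fineK.
have negE : neg = n%:E by rewrite /n fineK.
have pn : p < n by move: Hm; rewrite posE negE -EFinB lte_fin; lra.
have p0 : 0 <= p by rewrite -lee_fin -posE.
set c16 := 16 / g ^+ 2.
have c160 : 0 <= c16 by apply: divr_ge0; [lra|apply: exprn_ge0; lra].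
set K2 := k0%:R ^+ 2 + c16 * Mb.
have K21 : 1 <= K2.
  have : 1 <= k0%:R ^+ 2 :> R.
    by rewrite -natrX ler1n expn_gt0 ?(leq_trans _ k1).
  have := mulr_ge0 c160 Mb0; rewrite /K2; lra.
set b := Num.min (g / 2) ((n - p) / (2 * K2)).
have b0 : 0 < b.
  by rewrite lt_min; apply/andP; split; [lra|apply: divr_gt0; lra].
have bg : b <= g / 2 by rewrite ge_min lexx.
have bK : b <= (n - p) / (2 * K2) by rewrite ge_min lexx orbT.
have bK' : b * K2 <= (n - p) / 2.
  have K20 : 0 < K2 by lra.
  have K2n : K2 != 0 by rewrite gt_eqF.
  have e : (n - p) / (2 * K2) = (n - p) / 2 / K2 by field.
  by rewrite -ler_pdivlMr // -e.
exists b, (b * (n - p) / 2); split => //.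
  by apply: divr_gt0 => //; apply: mulr_gt0; lra.
set nm := fun d : int * int => if d.2 < 0 then (- d.2)%:~R * mu d else 0.
set pm := fun d : int * int => if 0 < d.2 then d.2%:~R * mu d else 0.
have Hpt d : mu d * expR (b * d.2%:~R) + b * nm d <=
    mu d + b * pm d + (b ^+ 2 * (k0%:R ^+ 2)) * mu d
    + (b ^+ 2 * c16) * (mu d * expR (g * d.2%:~R)).
  by apply: F5 => //; apply: hk.
have Sl : \esum_(d in [set: int * int]) (mu d * expR (b * d.2%:~R) + b * nm d)%:E =
    (\esum_(d in [set: int * int]) (mu d * expR (b * d.2%:~R))%:E + b%:E * n%:E)%E.
  under eq_esum do rewrite EFinD (EFinM b).
  rewrite esumD; last 2 first.
  - by move=> d _; rewrite lee_fin mulr_ge0 ?expR_ge0.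
  - move=> d _; apply: mule_ge0; rewrite lee_fin; first exact: ltW.
    by rewrite /nm; case: ifP => // h; rewrite mulr_ge0// ler0z oppr_ge0 ltW.
  rewrite esumZl ?(ltW b0)//; last first.
    by move=> d; rewrite lee_fin /nm; case: ifP => // h; rewrite mulr_ge0// ler0z oppr_ge0 ltW.
  by rewrite -negE /neg esum_if.
have Sr : \esum_(d in [set: int * int]) (mu d + b * pm d + (b ^+ 2 * (k0%:R ^+ 2)) * mu d
    + (b ^+ 2 * c16) * (mu d * expR (g * d.2%:~R)))%:E =
    (1 + b%:E * p%:E + (b ^+ 2 * (k0%:R ^+ 2))%:E * 1 + (b ^+ 2 * c16)%:E * M)%E.
  have pm0 d : 0 <= pm d by rewrite /pm; case: ifP => // h; rewrite mulr_ge0// ler0z ltW.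
  have bk0 : 0 <= b ^+ 2 * (k0%:R ^+ 2).
    by apply: mulr_ge0; apply: exprn_ge0; [exact: ltW|exact: ler0n].
  have bc0 : 0 <= b ^+ 2 * c16.
    by apply: mulr_ge0 => //; apply: exprn_ge0; exact: ltW.
  have b0' : 0 <= b by exact: ltW.
  under eq_esum do rewrite !EFinD (EFinM b) (EFinM (b ^+ 2 * (k0%:R ^+ 2))) (EFinM (b ^+ 2 * c16)).
  rewrite esumD; last 2 first.
  - by move=> d _; rewrite !adde_ge0 ?mule_ge0 ?lee_fin.
  - move=> d _; apply: mule_ge0; rewrite lee_fin; first exact: bc0.
    exact: mulr_ge0 (mu0 d) (expR_ge0 _).
  rewrite esumD; last 2 first.
  - by move=> d _; rewrite !adde_ge0 ?mule_ge0 ?lee_fin.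
  - by move=> d _; apply: mule_ge0; rewrite lee_fin.
  rewrite esumD; last 2 first.
  - by move=> d _; rewrite lee_fin.
  - by move=> d _; apply: mule_ge0; rewrite lee_fin.
  rewrite esumZl; last 2 first; [exact: b0'|by move=> d; rewrite lee_fin|].
  rewrite esumZl; last 2 first; [exact: bk0|by move=> d; rewrite lee_fin|].
  rewrite esumZl; last 2 first; [exact: bc0|by move=> d; rewrite lee_fin mulr_ge0 ?expR_ge0|].
  by rewrite mu1 -posE /pos esum_if.
have Hs : (\esum_(d in [set: int * int]) (mu d * expR (b * d.2%:~R) + b * nm d)%:E <=
    \esum_(d in [set: int * int]) (mu d + b * pm d + (b ^+ 2 * (k0%:R ^+ 2)) * mu d
    + (b ^+ 2 * c16) * (mu d * expR (g * d.2%:~R)))%:E)%E.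
  by apply: le_esum => d _; rewrite lee_fin; exact: Hpt.
rewrite Sl Sr mule1 in Hs.
have bc0 : 0 <= b ^+ 2 * c16.
  by apply: mulr_ge0 => //; apply: exprn_ge0; exact: ltW.
have Hs2 : (\esum_(d in [set: int * int]) (mu d * expR (b * d.2%:~R))%:E + (b * n)%:E <=
    (1 + b * p + b ^+ 2 * (k0%:R ^+ 2) + (b ^+ 2 * c16) * Mb)%:E)%E.
  rewrite EFinM; apply: (le_trans Hs).
  rewrite !EFinD !EFinM; apply: leeD => //.
  by apply: lee_wpmul2l; rewrite ?lee_fin.
apply: (@le_trans _ _ ((1 + b * p + b ^+ 2 * (k0%:R ^+ 2) + (b ^+ 2 * c16) * Mb) - b * n)%:E).
  by rewrite EFinB leeBrDr.
rewrite lee_fin.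
have : b * (b * K2) <= b * ((n - p) / 2) by apply: ler_wpM2l => //; exact: ltW.
rewrite /K2; nra.
Qed.

End Psi.

Section Q.
Variable R : realType.

Lemma castB (a b : nat) : ((a%:Z - b%:Z)%:~R : R) = a%:R - b%:R.
Proof. by rewrite intrB. Qed.

Lemma reindexN2 (F : int * int -> \bar R) (k0 v1 v2 : nat) :
  (k0 <= v1)%N -> (k0 <= v2)%N -> (forall d, (0 <= F d)%E) ->
  (forall a b : int, (a < - k0%:Z) \/ (b < - k0%:Z) -> F (a, b) = 0%E) ->
  \esum_(w in [set: nat * nat]) F (w.1%:Z - v1%:Z, w.2%:Z - v2%:Z) =
  \esum_(d in [set: int * int]) F d.
Proof.
move=> h1 h2 F0 FA.
set Q := [set d : int * int | - v1%:Z <= d.1 /\ - v2%:Z <= d.2].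
rewrite (esumID Q) //; rewrite [X in (_ + X)%E]esum1 ?adde0; last first.
  move=> [d1 d2] [_ /= hQ]; apply: FA.
  have : ~ ((- v1%:Z <= d1) /\ (- v2%:Z <= d2)) by [].
  move=> hn; case: (boolP (- v1%:Z <= d1)) => ha; last by left; lia.
  case: (boolP (- v2%:Z <= d2)) => hb; last by right; lia.
  by exfalso; apply: hn.
rewrite setTI.
rewrite (reindex_esum [set: nat * nat] Q (fun w : nat * nat => (w.1%:Z - v1%:Z, w.2%:Z - v2%:Z)))//.
split.
- by move=> [w1 w2] _ /=; rewrite /Q /=; split; lia.
- move=> [w1 w2] [x1 x2] _ _ /= [e1 e2].
  by congr pair; lia.
- move=> [d1 d2] [/= hd1 hd2]; exists (absz (d1 + v1%:Z), absz (d2 + v2%:Z)) => //=.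
  by congr pair; lia.
Qed.

End Q.

Section Q2.
Variable R : realType.

Lemma intr_geN (k0 : nat) (x : int) : - k0%:Z <= x -> - (k0%:R) <= (x%:~R : R).
Proof.
move=> h; have : ((- k0%:Z)%:~R <= x%:~R :> R) by rewrite ler_int.
by rewrite mulrNz.
Qed.

Lemma natB_geN (k0 w u : nat) : - k0%:Z <= w%:Z - u%:Z -> - (k0%:R) <= (w%:R - u%:R : R).
Proof.
move=> h; have : - (k0%:R) <= ((w%:Z - u%:Z)%:~R : R) by apply: intr_geN.
by rewrite castB.
Qed.

Lemma EX (a b dl gm k x y : R) : 0 < a -> 0 < b -> b <= gm -> 0 < dl -> 0 < gm ->
  0 <= k -> - k <= x -> - k <= y ->
  - a * x + b * y <= (a * k + (dl + gm) * k) + (dl * x + gm * y).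
Proof.
move=> a0 b0 bg d0 g0 kk hx hy.
have h1 : 0 <= a * (x + k) by apply: mulr_ge0; lra.
have h2 : 0 <= dl * (x + k) by apply: mulr_ge0; lra.
have h3 : 0 <= gm * (y + k) by apply: mulr_ge0; lra.
have h4 : 0 <= gm * k by apply: mulr_ge0; lra.
case: (lerP 0 y) => hy0.
  have h5 : 0 <= (gm - b) * y by apply: mulr_ge0; lra.
  lra.
have h5 : b * y <= 0 by nra.
lra.
Qed.

End Q2.

Theorem lemma5p12 (R : realType) (k0 : nat) (hk0 : (1 <= k0)%N)
  (mu : int * int -> R) (mu' mu'' : nat -> int * int -> R)
  (mu2 : nat -> nat -> int * int -> R)
  (* probability measures *)
  (Hmu : is_prob_Z2 mu)
  (Hmu' : forall j, (j < k0)%N -> is_prob_Z2 (mu' j))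
  (Hmu'' : forall i, (i < k0)%N -> is_prob_Z2 (mu'' i))
  (Hmu2 : forall i j, (i < k0)%N -> (j < k0)%N -> is_prob_Z2 (mu2 i j))
  (* (A1) *)
  (A1mu : forall a b : int, (a < - k0%:Z) \/ (b < - k0%:Z) -> mu (a, b) = 0)
  (A1mu' : forall j, (j < k0)%N -> forall a b : int,
      (a < - k0%:Z) \/ (b < - j%:Z) -> mu' j (a, b) = 0)
  (A1mu'' : forall i, (i < k0)%N -> forall a b : int,
      (b < - k0%:Z) \/ (a < - i%:Z) -> mu'' i (a, b) = 0)
  (A1mu2 : forall i j, (i < k0)%N -> (j < k0)%N -> forall a b : int,
      (a < - i%:Z) \/ (b < - j%:Z) -> mu2 i j (a, b) = 0)
  (* (A2) *)
  (A2 : exists (delta gamma C : R), 0 < delta /\ 0 < gamma /\ 0 < C /\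
      forall z : nat * nat,
        (\esum_(w in [set: nat * nat])
           ((kernelZ k0 mu mu' mu'' mu2 z w)%:E *
            (expR (delta * (w.1%:R - z.1%:R) + gamma * (w.2%:R - z.2%:R)))%:E)
         <= C%:E)%E)
  (* (A3) *)
  (A3Z0 : irreducible (kernelZ0 mu))
  (A3Z1 : irreducible (kernelZ1 k0 mu mu''))
  (A3Z2 : irreducible (kernelZ2 k0 mu mu'))
  (A3Z : irreducible (kernelZ k0 mu mu' mu'' mu2))
  (* m_2 < 0 *)
  (Hm2 : (mean2 mu < 0)%E) :
  forall k : nat, exists (Ct dt : R), 0 < Ct /\ 0 < dt /\
    forall (i j l : nat), (k0 <= i)%N -> (j < k0)%N ->
      (prob_YT_lt_tau k0 (kernelZ k0 mu mu' mu'' mu2) k (i, j) l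
       <= (Ct * expR (- dt * (i%:R + l%:R)))%:E)%E.

Proof.
move=> k.
have [mu0 mu1] := Hmu.
case: A2 => delta [gamma [C [d0 [g0 [C0 HA2]]]]].
set P := kernelZ k0 mu mu' mu'' mu2 in HA2 *.
have Pnn u w : 0 <= P u w.
  rewrite /P /kernelZ; case: ifP => [_|/negbT h1]; first exact: mu0.
  case: ifP => h2; first by apply: (Hmu' _ _).1; move: h1; rewrite h2 /= -ltnNge.
  case: ifP => h3; first by apply: (Hmu'' _ _).1; rewrite ltnNge h2.
  by apply: (Hmu2 _ _ _ _).1; rewrite ltnNge ?h2 ?h3.
have Pint u w : (k0 <= u.1)%N -> (k0 <= u.2)%N ->
    P u w = mu (w.1%:Z - u.1%:Z, w.2%:Z - u.2%:Z).
  by move=> h1 h2; rewrite /P /kernelZ h1 h2.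
have Pbd (i j : nat) w : (k0 <= i)%N -> (j < k0)%N ->
    P (i, j) w = mu' j (w.1%:Z - i%:Z, w.2%:Z - j%:Z).
  by move=> h1 h2; rewrite /P /kernelZ /= h1 /= leqNgt h2.
have munz x y : mu (x, y) != 0 -> - k0%:Z <= x /\ - k0%:Z <= y.
  move=> hn; split; rewrite leNgt; apply/negP => h; move/eqP: hn; apply; apply: A1mu.
  - by left.
  - by right.
have HM : (\esum_(d in [set: int * int]) (mu d * expR (gamma * d.2%:~R))%:E
    <= (expR (delta * k0%:R) * C)%:E)%E.
  have H0 := HA2 (k0, k0).
  set F := fun d : int * int => (mu d * expR (delta * d.1%:~R + gamma * d.2%:~R))%:E.
  have E0 : \esum_(w in [set: nat * nat]) ((P (k0, k0) w)%:E *
      (expR (delta * (w.1%:R - (k0, k0).1%:R) + gamma * (w.2%:R - (k0, k0).2%:R)))%:E)%E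
      = \esum_(w in [set: nat * nat]) F (w.1%:Z - k0%:Z, w.2%:Z - k0%:Z).
    by apply: eq_esum => w _; rewrite /F Pint //= -EFinM !castB.
  rewrite E0 (@reindexN2 R F k0 k0 k0) // in H0; last 2 first.
  - by move=> d; rewrite /F lee_fin mulr_ge0 ?expR_ge0.
  - by move=> x y hxy; rewrite /F A1mu // mul0r.
  apply: (@le_trans _ _ (\esum_(d in [set: int * int]) ((expR (delta * k0%:R))%:E * F d)%E)).
    apply: le_esum => d _; rewrite /F -EFinM lee_fin.
    have [->|mn0] := eqVneq (mu d) 0; first by rewrite !(mul0r, mulr0).
    move: mn0; case: d => x y mn0 /=.
    have [hx _] := munz x y mn0.
    have hx' := @intr_geN R _ _ hx.
    rewrite mulrCA; apply: ler_wpM2l => //; rewrite -expRD ler_expR; nra.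
  rewrite esumZl; last 2 first.
  - exact: expR_ge0.
  - by move=> d; rewrite /F lee_fin mulr_ge0 ?expR_ge0.
  by rewrite EFinM; apply: lee_wpmul2l; rewrite ?lee_fin ?expR_ge0.
have [b [eta [b0 bg eta0 Hpsi]]] := @psi_bound R k0 mu gamma _ hk0 Hmu A1mu g0 HM Hm2.
have k0R : 0 < k0%:R :> R by rewrite ltr0n.
set a := eta / k0%:R.
have a0 : 0 < a by apply: divr_gt0.
have hak : a * k0%:R = eta by rewrite /a mulfVK ?gt_eqF.
have Hint (u : nat * nat) : (k0 <= u.1)%N -> (k0 <= u.2)%N ->
  (\esum_(w in [set: nat * nat])
     (P u w * expR (- a * (w.1%:R - u.1%:R) + b * (w.2%:R - u.2%:R)))%:E <= 1)%E.
  move=> h1 h2.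
  set G := fun d : int * int => (mu d * expR (b * d.2%:~R))%:E.
  apply: (@le_trans _ _ (\esum_(w in [set: nat * nat])
     ((expR (a * k0%:R))%:E * G ((w.1%:Z - u.1%:Z)%R, (w.2%:Z - u.2%:Z)%R))%E)).
    apply: le_esum => w _; rewrite /G /= -EFinM lee_fin Pint // !castB.
    have [->|mn0] := eqVneq (mu (w.1%:Z - u.1%:Z, w.2%:Z - u.2%:Z)) 0.
      by rewrite !(mul0r, mulr0).
    have [hx _] := munz _ _ mn0.
    have hx' := @natB_geN R _ _ _ hx.
    rewrite mulrCA; apply: ler_wpM2l => //; rewrite -expRD ler_expR; nra.
  rewrite esumZl; last 2 first.
  - exact: expR_ge0.
  - by move=> d; rewrite /G lee_fin mulr_ge0 ?expR_ge0.
  rewrite (@reindexN2 R G k0) //; last 2 first.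
  - by move=> d; rewrite /G lee_fin mulr_ge0 ?expR_ge0.
  - by move=> x y hxy; rewrite /G A1mu // mul0r.
  apply: (le_trans (lee_wpmul2l _ Hpsi)); first by rewrite lee_fin expR_ge0.
  by rewrite -EFinM lee_fin hak; exact: E4.
set K := maxn k0.-1 k.
have kK : (k0.-1 <= K)%N by apply: leq_maxl.
have hA (u : nat * nat) : (K < u.1)%N -> (k0 <= u.1)%N.
  by move=> h; rewrite -(prednK hk0); apply: leq_ltn_trans kK h.
set c := a * k0%:R + (delta + gamma) * k0%:R.
exists (expR (a * K%:R + b * k0%:R) * (expR c * C)), (Num.min a b).
split; [|split].
- by rewrite !mulr_gt0 ?expR_gt0.
- by rewrite lt_min a0 b0.
move=> i j l hi hj.
rewrite /prob_YT_lt_tau /= -/K.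
pose h := fun w : nat * nat => expR (- a * (w.1%:R - K%:R) + b * (w.2%:R - l%:R)).
have hshift u w : h w = h u * expR (- a * (w.1%:R - u.1%:R) + b * (w.2%:R - u.2%:R)).
  by rewrite /h -expRD; congr expR; ring.
apply: (@le_trans _ _ (\esum_(w in [set: nat * nat]) (P (i, j) w * h w)%:E)).
  apply: exit_bound => //.
  - by move=> w; exact: expR_ge0.
  - move=> w [h1 [h2 _]]; rewrite /h h2 subrr mulr0 addr0.
    have hw : w.1%:R <= K%:R :> R by rewrite ler_nat.
    have := expR_ge1Dx (- a * (w.1%:R - K%:R)); nra.
  - by move=> w [h1 _] [h2 _]; lia.
  - move=> u [h1 h2].
    under eq_esum do rewrite (hshift u) mulrCA EFinM.
    rewrite esumZl; last 2 first.
    + exact: expR_ge0.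
    + by move=> w; rewrite lee_fin mulr_ge0 ?expR_ge0.
    have HH := Hint u (hA u h1) h2.
    have H2 : (0 <= (h u)%:E)%E by rewrite lee_fin expR_ge0.
    have := lee_wpmul2l H2 HH.
    by rewrite mule1.
under eq_esum do rewrite (hshift (i, j)) mulrCA EFinM.
rewrite esumZl; last 2 first.
- exact: expR_ge0.
- by move=> w; rewrite lee_fin mulr_ge0 ?expR_ge0.
apply: (@le_trans _ _ ((h (i, j))%:E * (expR c * C)%:E)%E).
  apply: lee_wpmul2l; first by rewrite lee_fin expR_ge0.
  apply: (@le_trans _ _ (\esum_(w in [set: nat * nat]) ((expR c)%:E * ((P (i, j) w)%:E *
      (expR (delta * (w.1%:R - (i, j).1%:R) + gamma * (w.2%:R - (i, j).2%:R)))%:E))%E)).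
    apply: le_esum => w _; rewrite -!EFinM lee_fin Pbd //.
    have [->|mn0] := eqVneq (mu' j (w.1%:Z - i%:Z, w.2%:Z - j%:Z)) 0.
      by rewrite !(mul0r, mulr0).
    have hx : - k0%:Z <= w.1%:Z - i%:Z.
      rewrite leNgt; apply/negP => h'; move/eqP: mn0; apply; apply: A1mu' => //; by left.
    have hy : - j%:Z <= w.2%:Z - j%:Z.
      rewrite leNgt; apply/negP => h'; move/eqP: mn0; apply; apply: A1mu' => //; by right.
    have hx' := @natB_geN R _ _ _ hx.
    have hy' := @natB_geN R _ _ _ hy.
    have jk : j%:R <= k0%:R :> R by rewrite ler_nat ltnW.
    rewrite mulrCA; apply: ler_wpM2l; first exact: (Hmu' j hj).1.
    rewrite -expRD ler_expR /c /=.
    apply: EX => //; try lra.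
  rewrite esumZl; last 2 first.
  - exact: expR_ge0.
  - by move=> w; rewrite mule_ge0 ?lee_fin ?expR_ge0.
  rewrite EFinM; apply: lee_wpmul2l; first by rewrite lee_fin expR_ge0.
  exact: HA2 (i, j).
rewrite -EFinM lee_fin.
have key : h (i, j) <= expR (a * K%:R + b * k0%:R) * expR (- Num.min a b * (i%:R + l%:R)).
  rewrite /h -expRD ler_expR /=.
  have m1 : Num.min a b <= a by rewrite ge_min lexx.
  have m2 : Num.min a b <= b by rewrite ge_min lexx orbT.
  have i0 : 0 <= i%:R :> R by exact: ler0n.
  have l0 : 0 <= l%:R :> R by exact: ler0n.
  have jk : j%:R <= k0%:R :> R by rewrite ler_nat ltnW.
  have p1 : 0 <= (a - Num.min a b) * i%:R by apply: mulr_ge0; lra.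
  have p2 : 0 <= (b - Num.min a b) * l%:R by apply: mulr_ge0; lra.
  have p3 : 0 <= b * (k0%:R - j%:R) by apply: mulr_ge0; lra.
  lra.
have -> : expR (a * K%:R + b * k0%:R) * (expR c * C) * expR (- Num.min a b * (i%:R + l%:R)) =
  (expR (a * K%:R + b * k0%:R) * expR (- Num.min a b * (i%:R + l%:R))) * (expR c * C) by ring.
apply: ler_wpM2r => //.
by rewrite mulr_ge0 ?expR_ge0 ?ltW.
Qed.
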